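(* Let $S_3^n=S_{K_3}^n$. Then $\chi_i'(S_3^1)=3$, $\chi_i'(S_3^2)=4$, and $\chi_i'(S_3^n)=5$ for every $n\ge 3$.
   Context: For a graph $H$ with at least one edge, an injective edge $k$-coloring is a map $c:E(H)\to\{1,\dots,k\}$ such that whenever $e_1=xy$, $e_2=yz$, $e_3=zu$ are edges of $H$ with $x,y,z$ distinct and $u\notin\{y,z\}$ (the case $u=x$ being allowed), we have $c(e_1)\ne c(e_3)$. The injective chromatic index $\chi_i'(H)$ is the least $k$ for which such a coloring exists. For a graph $G$ and positive integer $n$, the generalized Sierpiński graph $S_G^n$ has vertex set $V(G)^n$, and $(u_1,\dots,u_n)$, $(v_1,\dots,v_n)$ are adjacent if and only if there is $d\in\{1,\dots,n\}$ with $u_i=v_i$ for $i<d$, $u_dv_d\in E(G)$, and $u_i=v_d$, $v_i=u_d$ for all $i>d$. $K_3$ is the triangle. *)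

(* Defs.v *)
From mathcomp Require Import all_boot.
Set Implicit Arguments. Unset Strict Implicit. Unset Printing Implicit Defensive.

(* Generalized Sierpinski graph S_G^n: vertices are words of length n over the
   vertex set of G, represented as {ffun 'I_n -> T}; position d (1-based in the
   paper) is index d-1 here. *)
Definition sierp (T : finType) (G : rel T) (n : nat) : rel {ffun 'I_n -> T} :=
  fun u v => [exists d : 'I_n,
    [&& [forall i : 'I_n, (i < d) ==> (u i == v i)],
        G (u d) (v d) &
        [forall i : 'I_n, (d < i) ==> ((u i == v d) && (v i == u d))]]].

Arguments sierp {T} G n _ _.

Definition K3 : rel 'I_3 := fun x y => x != y.

(* An injective edge k-coloring of the graph with adjacency relation e:
   a map from edges (unordered adjacent pairs) to {1,...,k}, represented as a
   function on ordered pairs that is symmetric on edges. *)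
Definition inj_edge_coloring (T : finType) (e : rel T) (k : nat)
    (c : T -> T -> nat) : Prop :=
  (forall x y, e x y -> c x y = c y x) /\
  (forall x y, e x y -> 1 <= c x y <= k) /\
  (forall x y z u, e x y -> e y z -> e z u ->
     x != y -> y != z -> x != z -> u != y -> u != z ->
     c x y != c z u).

Definition inj_edge_colorable (T : finType) (e : rel T) (k : nat) : Prop :=
  exists c : T -> T -> nat, inj_edge_coloring e k c.

Definition inj_chromatic_index_is (T : finType) (e : rel T) (k : nat) : Prop :=
  inj_edge_colorable e k /\ (forall j, j < k -> ~ inj_edge_colorable e j).

(* Main.v *)
Require Import Defs.
From mathcomp Require Import all_boot zify.
Set Implicit Arguments. Unset Strict Implicit. Unset Printing Implicit Defensive.

Fixpoint sL (x y : seq nat) : bool :=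
  match x, y with
  | a :: r, b :: s => if a == b then sL r s else [&& size r == size s, all (pred1 b) r & all (pred1 a) s]
  | _, _ => false
  end.

Fixpoint words n : seq (seq nat) :=
  if n is n'.+1 then flatten [seq [seq a :: w | w <- words n'] | a <- [:: 0; 1; 2]] else [:: [::]].

Definition chk (S : eqType) (L : seq S) (R : rel S) (c : S -> S -> nat) k :=
 all (fun x => all (fun y => if R x y then
   (if (c x y == c y x) then if (0 < c x y <= k) then if x != y then
     all (fun z => if R y z then if z != x then
        all (fun u => if R z u then if u != y then c x y != c z u else true else true) L
        else true else true) L
    else false else false else false)
   else true) L) L.

Definition suf3 (l : seq nat) := drop (size l - 3) l.
Definition constb (w : seq nat) := all (pred1 (head 0 w)) w.
Definition lastdiff (l : seq nat) := foldl (fun acc a => if a != last 0 l then Some a else acc) None l.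
Definition st (l : seq nat) : seq nat * option nat := (suf3 l, if constb (suf3 l) then lastdiff l else None).
Definition Rt (p q : seq nat * option nat) : bool :=
  sL p.1 q.1 || [&& constb p.1, constb q.1, p.2 == Some (head 0 q.1) & q.2 == Some (head 0 p.1)].
Definition LH : seq (seq nat * option nat) :=
  [seq (w, None) | w <- words 3] ++
  flatten [seq [seq ([:: a; a; a], Some b) | b <- [:: 0; 1; 2] & a != b] | a <- [:: 0; 1; 2]].
Definition lookup (S : eqType) (tab : seq ((S * S) * nat)) (p q : S) : nat :=
  head 0 [seq t.2 | t <- tab & (t.1 == (p, q)) || (t.1 == (q, p))].
Definition tab1 : seq ((seq nat * seq nat) * nat) :=
[:: (([:: 0], [:: 1]), 1);
 (([:: 0], [:: 2]), 2);
 (([:: 1], [:: 2]), 3)].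

Definition tab2 : seq ((seq nat * seq nat) * nat) :=
[:: (([:: 0; 0], [:: 0; 1]), 3);
 (([:: 0; 0], [:: 0; 2]), 4);
 (([:: 0; 1], [:: 0; 2]), 1);
 (([:: 0; 1], [:: 1; 0]), 2);
 (([:: 0; 2], [:: 2; 0]), 1);
 (([:: 1; 0], [:: 1; 1]), 4);
 (([:: 1; 0], [:: 1; 2]), 2);
 (([:: 1; 1], [:: 1; 2]), 1);
 (([:: 1; 2], [:: 2; 1]), 3);
 (([:: 2; 0], [:: 2; 1]), 3);
 (([:: 2; 0], [:: 2; 2]), 2);
 (([:: 2; 1], [:: 2; 2]), 4)].

Definition tabH : seq (((seq nat * option nat) * (seq nat * option nat)) * nat) :=
[:: ((([:: 0; 0; 0], Some 1), ([:: 0; 0; 1], None)), 3);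
 ((([:: 0; 0; 0], Some 1), ([:: 0; 0; 2], None)), 4);
 ((([:: 0; 0; 0], Some 1), ([:: 1; 1; 1], Some 0)), 1);
 ((([:: 0; 0; 0], Some 2), ([:: 0; 0; 1], None)), 3);
 ((([:: 0; 0; 0], Some 2), ([:: 0; 0; 2], None)), 4);
 ((([:: 0; 0; 0], Some 2), ([:: 2; 2; 2], Some 0)), 1);
 ((([:: 0; 0; 0], None), ([:: 0; 0; 1], None)), 3);
 ((([:: 0; 0; 0], None), ([:: 0; 0; 2], None)), 4);
 ((([:: 0; 0; 1], None), ([:: 0; 0; 2], None)), 2);
 ((([:: 0; 0; 1], None), ([:: 0; 1; 0], None)), 2);
 ((([:: 0; 0; 2], None), ([:: 0; 2; 0], None)), 4);
 ((([:: 0; 1; 0], None), ([:: 0; 1; 1], None)), 1);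
 ((([:: 0; 1; 0], None), ([:: 0; 1; 2], None)), 4);
 ((([:: 0; 1; 1], None), ([:: 0; 1; 2], None)), 3);
 ((([:: 0; 1; 1], None), ([:: 1; 0; 0], None)), 3);
 ((([:: 0; 1; 2], None), ([:: 0; 2; 1], None)), 5);
 ((([:: 0; 2; 0], None), ([:: 0; 2; 1], None)), 1);
 ((([:: 0; 2; 0], None), ([:: 0; 2; 2], None)), 3);
 ((([:: 0; 2; 1], None), ([:: 0; 2; 2], None)), 5);
 ((([:: 0; 2; 2], None), ([:: 2; 0; 0], None)), 2);
 ((([:: 1; 0; 0], None), ([:: 1; 0; 1], None)), 4);
 ((([:: 1; 0; 0], None), ([:: 1; 0; 2], None)), 5);
 ((([:: 1; 0; 1], None), ([:: 1; 0; 2], None)), 1);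
 ((([:: 1; 0; 1], None), ([:: 1; 1; 0], None)), 2);
 ((([:: 1; 0; 2], None), ([:: 1; 2; 0], None)), 5);
 ((([:: 1; 1; 0], None), ([:: 1; 1; 1], Some 0)), 2);
 ((([:: 1; 1; 0], None), ([:: 1; 1; 1], Some 2)), 2);
 ((([:: 1; 1; 0], None), ([:: 1; 1; 1], None)), 2);
 ((([:: 1; 1; 0], None), ([:: 1; 1; 2], None)), 3);
 ((([:: 1; 1; 1], Some 0), ([:: 1; 1; 2], None)), 5);
 ((([:: 1; 1; 1], Some 2), ([:: 1; 1; 2], None)), 4);
 ((([:: 1; 1; 1], Some 2), ([:: 2; 2; 2], Some 1)), 1);
 ((([:: 1; 1; 1], None), ([:: 1; 1; 2], None)), 4);
 ((([:: 1; 1; 2], None), ([:: 1; 2; 1], None)), 3);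
 ((([:: 1; 2; 0], None), ([:: 1; 2; 1], None)), 2);
 ((([:: 1; 2; 0], None), ([:: 1; 2; 2], None)), 4);
 ((([:: 1; 2; 1], None), ([:: 1; 2; 2], None)), 1);
 ((([:: 1; 2; 2], None), ([:: 2; 1; 1], None)), 4);
 ((([:: 2; 0; 0], None), ([:: 2; 0; 1], None)), 2);
 ((([:: 2; 0; 0], None), ([:: 2; 0; 2], None)), 1);
 ((([:: 2; 0; 1], None), ([:: 2; 0; 2], None)), 5);
 ((([:: 2; 0; 1], None), ([:: 2; 1; 0], None)), 3);
 ((([:: 2; 0; 2], None), ([:: 2; 2; 0], None)), 4);
 ((([:: 2; 1; 0], None), ([:: 2; 1; 1], None)), 3);
 ((([:: 2; 1; 0], None), ([:: 2; 1; 2], None)), 1);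
 ((([:: 2; 1; 1], None), ([:: 2; 1; 2], None)), 2);
 ((([:: 2; 1; 2], None), ([:: 2; 2; 1], None)), 5);
 ((([:: 2; 2; 0], None), ([:: 2; 2; 1], None)), 4);
 ((([:: 2; 2; 0], None), ([:: 2; 2; 2], Some 0)), 2);
 ((([:: 2; 2; 0], None), ([:: 2; 2; 2], Some 1)), 3);
 ((([:: 2; 2; 0], None), ([:: 2; 2; 2], None)), 2);
 ((([:: 2; 2; 1], None), ([:: 2; 2; 2], Some 0)), 5);
 ((([:: 2; 2; 1], None), ([:: 2; 2; 2], Some 1)), 5);
 ((([:: 2; 2; 1], None), ([:: 2; 2; 2], None)), 5)].

Definition ed1 : seq (seq nat * seq nat) :=
[:: ([:: 0], [:: 1]);
 ([:: 0], [:: 2]);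
 ([:: 1], [:: 2])].

Definition wit1 : seq ((nat * nat) * (seq nat * seq nat * seq nat * seq nat)) :=
[:: ((0, 1), ([:: 0], [:: 1], [:: 2], [:: 0]));
 ((0, 2), ([:: 1], [:: 0], [:: 2], [:: 1]));
 ((1, 2), ([:: 2], [:: 0], [:: 1], [:: 2]))].

Definition ed2 : seq (seq nat * seq nat) :=
[:: ([:: 1; 0], [:: 1; 2]);
 ([:: 1; 1], [:: 1; 2]);
 ([:: 2; 0], [:: 2; 1]);
 ([:: 2; 1], [:: 2; 2])].

Definition wit2 : seq ((nat * nat) * (seq nat * seq nat * seq nat * seq nat)) :=
[:: ((0, 2), ([:: 1; 0], [:: 1; 2], [:: 2; 1], [:: 2; 0]));
 ((0, 3), ([:: 1; 0], [:: 1; 2], [:: 2; 1], [:: 2; 2]));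
 ((1, 2), ([:: 1; 1], [:: 1; 2], [:: 2; 1], [:: 2; 0]));
 ((1, 3), ([:: 1; 1], [:: 1; 2], [:: 2; 1], [:: 2; 2]));
 ((0, 1), ([:: 1; 2], [:: 1; 0], [:: 1; 1], [:: 1; 2]));
 ((2, 3), ([:: 2; 1], [:: 2; 0], [:: 2; 2], [:: 2; 1]))].

Definition ed3 : seq (seq nat * seq nat) :=
[:: ([:: 1; 2; 0], [:: 1; 2; 1]);
 ([:: 1; 2; 0], [:: 1; 2; 2]);
 ([:: 1; 2; 1], [:: 1; 2; 2]);
 ([:: 2; 1; 0], [:: 2; 1; 1]);
 ([:: 2; 1; 1], [:: 2; 1; 2]);
 ([:: 2; 1; 0], [:: 2; 1; 2]);
 ([:: 1; 0; 1], [:: 1; 0; 2]);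
 ([:: 1; 1; 0], [:: 1; 1; 2]);
 ([:: 1; 0; 0], [:: 1; 0; 2]);
 ([:: 1; 0; 0], [:: 1; 0; 1]);
 ([:: 1; 1; 0], [:: 1; 1; 1]);
 ([:: 1; 1; 1], [:: 1; 1; 2]);
 ([:: 1; 2; 2], [:: 2; 1; 1]);
 ([:: 1; 0; 2], [:: 1; 2; 0]);
 ([:: 1; 1; 2], [:: 1; 2; 1]);
 ([:: 1; 0; 1], [:: 1; 1; 0]);
 ([:: 2; 0; 1], [:: 2; 0; 2]);
 ([:: 2; 2; 0], [:: 2; 2; 1]);
 ([:: 2; 0; 0], [:: 2; 0; 1]);
 ([:: 2; 0; 0], [:: 2; 0; 2]);
 ([:: 2; 0; 1], [:: 2; 1; 0]);
 ([:: 2; 1; 2], [:: 2; 2; 1]);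
 ([:: 2; 2; 0], [:: 2; 2; 2]);
 ([:: 2; 2; 1], [:: 2; 2; 2]);
 ([:: 2; 0; 2], [:: 2; 2; 0])].

Definition wit3 : seq ((nat * nat) * (seq nat * seq nat * seq nat * seq nat)) :=
[:: ((9, 8), ([:: 1; 0; 0], [:: 1; 0; 1], [:: 1; 0; 2], [:: 1; 0; 0]));
 ((9, 13), ([:: 1; 0; 0], [:: 1; 0; 1], [:: 1; 0; 2], [:: 1; 2; 0]));
 ((9, 10), ([:: 1; 0; 0], [:: 1; 0; 1], [:: 1; 1; 0], [:: 1; 1; 1]));
 ((9, 7), ([:: 1; 0; 0], [:: 1; 0; 1], [:: 1; 1; 0], [:: 1; 1; 2]));
 ((8, 15), ([:: 1; 0; 0], [:: 1; 0; 2], [:: 1; 0; 1], [:: 1; 1; 0]));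
 ((8, 0), ([:: 1; 0; 0], [:: 1; 0; 2], [:: 1; 2; 0], [:: 1; 2; 1]));
 ((8, 1), ([:: 1; 0; 0], [:: 1; 0; 2], [:: 1; 2; 0], [:: 1; 2; 2]));
 ((9, 6), ([:: 1; 0; 1], [:: 1; 0; 0], [:: 1; 0; 2], [:: 1; 0; 1]));
 ((6, 0), ([:: 1; 0; 1], [:: 1; 0; 2], [:: 1; 2; 0], [:: 1; 2; 1]));
 ((6, 1), ([:: 1; 0; 1], [:: 1; 0; 2], [:: 1; 2; 0], [:: 1; 2; 2]));
 ((15, 11), ([:: 1; 0; 1], [:: 1; 1; 0], [:: 1; 1; 1], [:: 1; 1; 2]));
 ((15, 14), ([:: 1; 0; 1], [:: 1; 1; 0], [:: 1; 1; 2], [:: 1; 2; 1]));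
 ((8, 6), ([:: 1; 0; 2], [:: 1; 0; 0], [:: 1; 0; 1], [:: 1; 0; 2]));
 ((6, 10), ([:: 1; 0; 2], [:: 1; 0; 1], [:: 1; 1; 0], [:: 1; 1; 1]));
 ((6, 7), ([:: 1; 0; 2], [:: 1; 0; 1], [:: 1; 1; 0], [:: 1; 1; 2]));
 ((13, 14), ([:: 1; 0; 2], [:: 1; 2; 0], [:: 1; 2; 1], [:: 1; 1; 2]));
 ((13, 2), ([:: 1; 0; 2], [:: 1; 2; 0], [:: 1; 2; 1], [:: 1; 2; 2]));
 ((13, 12), ([:: 1; 0; 2], [:: 1; 2; 0], [:: 1; 2; 2], [:: 2; 1; 1]));
 ((15, 13), ([:: 1; 1; 0], [:: 1; 0; 1], [:: 1; 0; 2], [:: 1; 2; 0]));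
 ((10, 7), ([:: 1; 1; 0], [:: 1; 1; 1], [:: 1; 1; 2], [:: 1; 1; 0]));
 ((10, 14), ([:: 1; 1; 0], [:: 1; 1; 1], [:: 1; 1; 2], [:: 1; 2; 1]));
 ((7, 0), ([:: 1; 1; 0], [:: 1; 1; 2], [:: 1; 2; 1], [:: 1; 2; 0]));
 ((7, 2), ([:: 1; 1; 0], [:: 1; 1; 2], [:: 1; 2; 1], [:: 1; 2; 2]));
 ((10, 11), ([:: 1; 1; 1], [:: 1; 1; 0], [:: 1; 1; 2], [:: 1; 1; 1]));
 ((11, 0), ([:: 1; 1; 1], [:: 1; 1; 2], [:: 1; 2; 1], [:: 1; 2; 0]));
 ((11, 2), ([:: 1; 1; 1], [:: 1; 1; 2], [:: 1; 2; 1], [:: 1; 2; 2]));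
 ((7, 11), ([:: 1; 1; 2], [:: 1; 1; 0], [:: 1; 1; 1], [:: 1; 1; 2]));
 ((14, 1), ([:: 1; 1; 2], [:: 1; 2; 1], [:: 1; 2; 0], [:: 1; 2; 2]));
 ((14, 12), ([:: 1; 1; 2], [:: 1; 2; 1], [:: 1; 2; 2], [:: 2; 1; 1]));
 ((0, 1), ([:: 1; 2; 0], [:: 1; 2; 1], [:: 1; 2; 2], [:: 1; 2; 0]));
 ((0, 12), ([:: 1; 2; 0], [:: 1; 2; 1], [:: 1; 2; 2], [:: 2; 1; 1]));
 ((1, 3), ([:: 1; 2; 0], [:: 1; 2; 2], [:: 2; 1; 1], [:: 2; 1; 0]));
 ((1, 4), ([:: 1; 2; 0], [:: 1; 2; 2], [:: 2; 1; 1], [:: 2; 1; 2]));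
 ((0, 2), ([:: 1; 2; 1], [:: 1; 2; 0], [:: 1; 2; 2], [:: 1; 2; 1]));
 ((2, 3), ([:: 1; 2; 1], [:: 1; 2; 2], [:: 2; 1; 1], [:: 2; 1; 0]));
 ((2, 4), ([:: 1; 2; 1], [:: 1; 2; 2], [:: 2; 1; 1], [:: 2; 1; 2]));
 ((1, 2), ([:: 1; 2; 2], [:: 1; 2; 0], [:: 1; 2; 1], [:: 1; 2; 2]));
 ((12, 20), ([:: 1; 2; 2], [:: 2; 1; 1], [:: 2; 1; 0], [:: 2; 0; 1]));
 ((12, 5), ([:: 1; 2; 2], [:: 2; 1; 1], [:: 2; 1; 0], [:: 2; 1; 2]));
 ((12, 21), ([:: 1; 2; 2], [:: 2; 1; 1], [:: 2; 1; 2], [:: 2; 2; 1]));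
 ((18, 19), ([:: 2; 0; 0], [:: 2; 0; 1], [:: 2; 0; 2], [:: 2; 0; 0]));
 ((18, 24), ([:: 2; 0; 0], [:: 2; 0; 1], [:: 2; 0; 2], [:: 2; 2; 0]));
 ((18, 3), ([:: 2; 0; 0], [:: 2; 0; 1], [:: 2; 1; 0], [:: 2; 1; 1]));
 ((18, 5), ([:: 2; 0; 0], [:: 2; 0; 1], [:: 2; 1; 0], [:: 2; 1; 2]));
 ((19, 20), ([:: 2; 0; 0], [:: 2; 0; 2], [:: 2; 0; 1], [:: 2; 1; 0]));
 ((19, 17), ([:: 2; 0; 0], [:: 2; 0; 2], [:: 2; 2; 0], [:: 2; 2; 1]));
 ((19, 22), ([:: 2; 0; 0], [:: 2; 0; 2], [:: 2; 2; 0], [:: 2; 2; 2]));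
 ((18, 16), ([:: 2; 0; 1], [:: 2; 0; 0], [:: 2; 0; 2], [:: 2; 0; 1]));
 ((16, 17), ([:: 2; 0; 1], [:: 2; 0; 2], [:: 2; 2; 0], [:: 2; 2; 1]));
 ((16, 22), ([:: 2; 0; 1], [:: 2; 0; 2], [:: 2; 2; 0], [:: 2; 2; 2]));
 ((20, 4), ([:: 2; 0; 1], [:: 2; 1; 0], [:: 2; 1; 1], [:: 2; 1; 2]));
 ((20, 21), ([:: 2; 0; 1], [:: 2; 1; 0], [:: 2; 1; 2], [:: 2; 2; 1]));
 ((19, 16), ([:: 2; 0; 2], [:: 2; 0; 0], [:: 2; 0; 1], [:: 2; 0; 2]));
 ((16, 3), ([:: 2; 0; 2], [:: 2; 0; 1], [:: 2; 1; 0], [:: 2; 1; 1]));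
 ((16, 5), ([:: 2; 0; 2], [:: 2; 0; 1], [:: 2; 1; 0], [:: 2; 1; 2]));
 ((24, 21), ([:: 2; 0; 2], [:: 2; 2; 0], [:: 2; 2; 1], [:: 2; 1; 2]));
 ((24, 23), ([:: 2; 0; 2], [:: 2; 2; 0], [:: 2; 2; 1], [:: 2; 2; 2]));
 ((20, 24), ([:: 2; 1; 0], [:: 2; 0; 1], [:: 2; 0; 2], [:: 2; 2; 0]));
 ((3, 5), ([:: 2; 1; 0], [:: 2; 1; 1], [:: 2; 1; 2], [:: 2; 1; 0]));
 ((3, 21), ([:: 2; 1; 0], [:: 2; 1; 1], [:: 2; 1; 2], [:: 2; 2; 1]));
 ((5, 17), ([:: 2; 1; 0], [:: 2; 1; 2], [:: 2; 2; 1], [:: 2; 2; 0]));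
 ((5, 23), ([:: 2; 1; 0], [:: 2; 1; 2], [:: 2; 2; 1], [:: 2; 2; 2]));
 ((3, 4), ([:: 2; 1; 1], [:: 2; 1; 0], [:: 2; 1; 2], [:: 2; 1; 1]));
 ((4, 17), ([:: 2; 1; 1], [:: 2; 1; 2], [:: 2; 2; 1], [:: 2; 2; 0]));
 ((4, 23), ([:: 2; 1; 1], [:: 2; 1; 2], [:: 2; 2; 1], [:: 2; 2; 2]));
 ((5, 4), ([:: 2; 1; 2], [:: 2; 1; 0], [:: 2; 1; 1], [:: 2; 1; 2]));
 ((21, 22), ([:: 2; 1; 2], [:: 2; 2; 1], [:: 2; 2; 0], [:: 2; 2; 2]));
 ((17, 22), ([:: 2; 2; 0], [:: 2; 2; 1], [:: 2; 2; 2], [:: 2; 2; 0]));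
 ((17, 23), ([:: 2; 2; 1], [:: 2; 2; 0], [:: 2; 2; 2], [:: 2; 2; 1]));
 ((22, 23), ([:: 2; 2; 2], [:: 2; 2; 0], [:: 2; 2; 1], [:: 2; 2; 2]))].

Lemma sL_size x y : sL x y -> size x = size y.
Proof.
elim: x y => [|a r IH] [|b s] //=.
case: eqP => _; first by move/IH ->.
by case/and3P => /eqP ->.
Qed.

Lemma sL_sym x y : sL x y = sL y x.
Proof.
elim: x y => [|a r IH] [|b s] //=.
case: (a =P b) => [<-|/eqP ab]; first by rewrite eqxx.
rewrite [b == a]eq_sym (negbTE ab) [size s == _]eq_sym.
by case: (size r == size s) => //=; exact: andbC.
Qed.

Lemma sL_cat p a b : sL (p ++ a) (p ++ b) = sL a b.
Proof. by elim: p => //= c p IH; rewrite eqxx. Qed.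

Lemma sL_form x y : sL x y ->
  exists (p : seq nat) (a b m : nat), [/\ a != b, x = p ++ a :: nseq m b & y = p ++ b :: nseq m a].
Proof.
elim: x y => [|a r IH] [|b s] //=.
case: eqP => [<-|/eqP ab].
  move/IH => [p [a' [b' [m [H1 H2 H3]]]]].
  by exists (a :: p), a', b', m; rewrite H2 H3.
case/and3P => /eqP es /all_pred1P Hr /all_pred1P Hs.
exists [::], a, b, (size r); split => //=; first by rewrite -Hr.
by rewrite es -Hs.
Qed.

Lemma sL_formE p a b m : a != b -> sL (p ++ a :: nseq m b) (p ++ b :: nseq m a).
Proof.
move=> ab; rewrite sL_cat /= (negbTE ab) !size_nseq eqxx.
by rewrite !all_pred1_nseq.
Qed.

Lemma sL_nseq s a w : sL (nseq s a) w ->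
  exists d, d != a /\ w = nseq s.-1 a ++ [:: d].
Proof.
move/sL_form => [p [a' [b' [m [ab Hx Hy]]]]].
have Ha' : a' = a.
  have : a' \in nseq s a by rewrite Hx mem_cat in_cons eqxx orbT.
  by rewrite mem_nseq => /andP [_ /eqP].
case: m Hx Hy => [|m] Hx Hy.
  exists b'; split; first by rewrite -Ha' eq_sym.
  have Hp : all (pred1 a) p.
    apply/allP => x xp; have: x \in nseq s a by rewrite Hx mem_cat xp.
    by rewrite mem_nseq => /andP[_ /eqP ->] /=.
  have := congr1 size Hx; rewrite size_nseq size_cat /= addn1 => Hs.
  move/all_pred1P: Hp => Hp.
  by rewrite Hy Hs /= {1}Hp.
have Hb : b' = a.
  have : b' \in nseq s a by rewrite Hx mem_cat /= !inE eqxx !orbT.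
  by rewrite mem_nseq => /andP [_ /eqP].
by move: ab; rewrite Ha' Hb eqxx.
Qed.

Lemma nseq_split3 m (b : nat) : nseq m.+3 b = nseq m b ++ [:: b; b; b].
Proof. by rewrite -addn3 nseqD. Qed.

Lemma suf3_sz3 p w : size w = 3 -> suf3 (p ++ w) = w.
Proof. by move=> Hw; rewrite /suf3 size_cat Hw addnK drop_size_cat. Qed.

Lemma suf3_cons c r : 3 <= size r -> suf3 (c :: r) = suf3 r.
Proof. by move=> Hr; rewrite /suf3 /= subSn. Qed.

Lemma suf3_3 w : size w = 3 -> suf3 w = w.
Proof. by move=> Hw; rewrite /suf3 Hw subnn drop0. Qed.

Lemma locinj x y z : 3 <= size x -> sL x y -> sL x z -> y != z -> suf3 y != suf3 z.
Proof.
elim: x y z => [|c r IH] [|c1 ry] [|c2 rz] //= Hs H1 H2 yz.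
have S1 : size r = size ry by have := @sL_size (c :: r) (c1 :: ry) H1 => [[]].
have S2 : size r = size rz by have := @sL_size (c :: r) (c2 :: rz) H2 => [[]].
have [Hr|Hr] := ltnP (size r) 3.
  rewrite !suf3_3 //.
  - by rewrite /= -S2; apply/eqP; rewrite eqSS; move: Hs Hr; case: (size r) => [|[|[|[|k]]]].
  - by rewrite /= -S1; apply/eqP; rewrite eqSS; move: Hs Hr; case: (size r) => [|[|[|[|k]]]].
have Hry : 3 <= size ry by rewrite -S1.
have Hrz : 3 <= size rz by rewrite -S2.
rewrite !suf3_cons //.
move: H1 H2 yz; case: (c =P c1) => [E1|/eqP n1] H1; case: (c =P c2) => [E2|/eqP n2] H2 yz;
  rewrite -?E1 -?E2 in yz H1 H2 *.
- by apply: IH => //; apply: contra yz => /eqP ->.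
- case/and3P: H2 => /eqP E2 /all_pred1P Er /all_pred1P Ez.
  rewrite Er in H1; have [d [dn Hd]] := sL_nseq H1.
  move: Hd Ez; rewrite -E2; case: (size r) Hr => [|[|[|k]]] // _ Hd Ez.
  have -> : ry = nseq k c2 ++ [:: c2; c2; d] by rewrite Hd -addn2 nseqD -catA.
  rewrite Ez nseq_split3 !suf3_sz3 //.
  by apply: contraNneq n2 => -[-> _ _].
- case/and3P: H1 => /eqP E1 /all_pred1P Er /all_pred1P Ey.
  rewrite Er in H2; have [d [dn Hd]] := sL_nseq H2.
  move: Hd Ey; rewrite -E1; case: (size r) Hr => [|[|[|k]]] // _ Hd Ey.
  have -> : rz = nseq k c1 ++ [:: c1; c1; d] by rewrite Hd -addn2 nseqD -catA.
  rewrite Ey nseq_split3 !suf3_sz3 //.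
  by apply: contraNneq n1 => -[-> _ _].
- case/and3P: H1 => /eqP E1 /all_pred1P Er1 /all_pred1P Ey.
  case/and3P: H2 => /eqP E2 /all_pred1P Er2 /all_pred1P Ez.
  have c12 : c1 = c2.
    case: (r) Hr Er1 Er2 => // r0 r' _ /= [<- _] [<- _] //.
  by move: yz; rewrite Ey Ez -E1 -E2 c12 eqxx.
Qed.

Lemma foldl_nseq (L b : nat) (acc : option nat) m : b = L ->
  foldl (fun acc a => if a != L then Some a else acc) acc (nseq m b) = acc.
Proof. by move=> ->; elim: m => //= m IH; rewrite eqxx. Qed.

Lemma last_nseqS (a b : nat) m : last a (nseq m.+1 b) = b.
Proof. by elim: m => //= m IH. Qed.

Lemma lastdiff_form p a b m : a != b -> lastdiff (p ++ a :: nseq m.+1 b) = Some a.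
Proof.
move=> ab; rewrite /lastdiff last_cat last_cons last_nseqS foldl_cat -cat1s foldl_cat foldl_nseq //.
by rewrite /= ab.
Qed.

Lemma hom x y : 3 <= size x -> sL x y -> Rt (st x) (st y).
Proof.
move=> Hs /sL_form [p [a [b [m [ab Hx Hy]]]]].
have [Hm|Hm] := ltnP 2 m.
  case: m Hm Hx Hy => [|[|[|m]]] // _ Hx Hy.
  have Ex : suf3 x = [:: b; b; b]
    by rewrite Hx nseq_split3 -cat_cons catA suf3_sz3.
  have Ey : suf3 y = [:: a; a; a]
    by rewrite Hy nseq_split3 -cat_cons catA suf3_sz3.
  have Lx : lastdiff x = Some a by rewrite Hx lastdiff_form.
  have Ly : lastdiff y = Some b by rewrite Hy lastdiff_form // eq_sym.
  by rewrite /Rt /st Ex Ey Lx Ly /constb /= !eqxx orbT.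
have Sp : 2 - m <= size p.
  by move: Hs; rewrite Hx size_cat /= size_nseq; lia.
set q := drop (size p - (2 - m)) p.
have Eq : p = take (size p - (2 - m)) p ++ q by rewrite cat_take_drop.
have Sq : size (q ++ a :: nseq m b) = 3.
  rewrite size_cat size_drop /= size_nseq; lia.
have Sq' : size (q ++ b :: nseq m a) = 3 by rewrite size_cat size_drop /= size_nseq; lia.
have Ex : suf3 x = q ++ a :: nseq m b by rewrite Hx {1}Eq -catA suf3_sz3.
have Ey : suf3 y = q ++ b :: nseq m a by rewrite Hy {1}Eq -catA suf3_sz3.
by rewrite /Rt /st /= Ex Ey sL_formE.
Qed.

Lemma in_words k w : size w = k -> all (fun a => a < 3) w -> w \in words k.
Proof.
elim: w k => [|a w IH] [|k] //= [Hk] /andP [Ha Hw].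
have Hin := IH _ Hk Hw.
rewrite !mem_cat.
by case: a Ha => [|[|[|a]]] // _; rewrite (map_f (cons _) Hin) ?orbT.
Qed.

Lemma foldl_ld (L : nat) acc l b :
  foldl (fun acc a => if a != L then Some a else acc) acc l = Some b ->
  acc = Some b \/ (b \in l /\ b != L).
Proof.
elim: l acc => [|c l IH] acc /=; first by left.
move/IH => [|[bl bL]]; last by right; rewrite in_cons bl orbT.
case: ifP => [cL [<-]|_ ->]; last by left.
by right; rewrite in_cons eqxx.
Qed.

Lemma lastdiffP l b : lastdiff l = Some b -> b \in l /\ b != last 0 l.
Proof. by move/foldl_ld => [|//]. Qed.

Lemma LH_const a b : a < 3 -> b < 3 -> a != b -> ([:: a; a; a], Some b) \in LH.
Proof. by case: a => [|[|[|a]]] //; case: b => [|[|[|b]]]. Qed.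

Lemma LH_none w : w \in words 3 -> (w, None) \in LH.
Proof. by move=> Hw; rewrite mem_cat (map_f (fun w => (w, None)) Hw). Qed.

Lemma st_in l : 3 <= size l -> all (fun a => a < 3) l -> st l \in LH.
Proof.
move=> Hs Hl.
have Sw : size (suf3 l) = 3 by rewrite /suf3 size_drop subKn.
have Aw : all (fun a => a < 3) (suf3 l) by apply/allP => a /mem_drop /(allP Hl).
rewrite /st; case: ifP => Hc; last by apply: LH_none; apply: in_words.
case Ed: (lastdiff l) => [b|]; last by apply: LH_none; apply: in_words.
have [bl bL] := lastdiffP Ed.
have El : l = take (size l - 3) l ++ suf3 l by rewrite cat_take_drop.
have LL : last 0 l = last (last 0 (take (size l - 3) l)) (suf3 l) by rewrite {1}El last_cat.
move: Sw Aw Hc bL; rewrite LL.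
case: (suf3 l) => [|w0 [|w1 [|w2 [|]]]] // _ /= /and4P [h0 h1 h2 _] /and4P [_ /eqP e1 /eqP e2 _] bL.
rewrite /= in e1 e2; rewrite e1 e2 in bL *.
by apply: LH_const; [done | exact: (allP Hl) | rewrite eq_sym].
Qed.

Definition tolist n (x : {ffun 'I_n -> 'I_3}) : seq nat := [seq nat_of_ord (x i) | i <- enum 'I_n].

Lemma size_tolist n (x : {ffun 'I_n -> 'I_3}) : size (tolist x) = n.
Proof. by rewrite size_map size_enum_ord. Qed.

Lemma nth_tolist n (x : {ffun 'I_n -> 'I_3}) (i : 'I_n) : nth 0 (tolist x) i = x i.
Proof. by rewrite (nth_map i) ?size_enum_ord // nth_ord_enum. Qed.

Lemma all_tolist n (x : {ffun 'I_n -> 'I_3}) : all (fun a => a < 3) (tolist x).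
Proof. by apply/allP => a /mapP [i _ ->]. Qed.

Lemma tolist_inj n : injective (@tolist n).
Proof.
move=> x y H; apply/ffunP => i; apply/val_inj.
by rewrite /= -!nth_tolist H.
Qed.

Definition fromlist n (l : seq nat) : {ffun 'I_n -> 'I_3} := [ffun i : 'I_n => inord (nth 0 l i)].

Lemma tolist_from n l : size l = n -> all (fun a => a < 3) l -> tolist (fromlist n l) = l.
Proof.
move=> Hs Ha; apply: (@eq_from_nth _ 0); rewrite ?size_tolist // => i Hi.
have := nth_tolist (fromlist n l) (Ordinal Hi); rewrite /= => ->.
rewrite ffunE inordK //; apply: (allP Ha); by apply: mem_nth; rewrite Hs.
Qed.

Lemma nth_form (p : seq nat) (a b m i : nat) : i < size p + m.+1 ->
  nth 0 (p ++ a :: nseq m b) i = if i < size p then nth 0 p i else if i == size p then a else b.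
Proof.
move=> Hi; rewrite nth_cat; case: ltnP => // H.
case: eqP => [->|ne]; first by rewrite subnn.
have -> : i - size p = (i - size p).-1.+1 by rewrite prednK // subn_gt0 ltn_neqAle H andbT; apply/eqP => E; apply: ne.
by rewrite /= nth_nseq; case: ltnP => //; lia.
Qed.

Lemma sierp_sL n (x y : {ffun 'I_n -> 'I_3}) : sierp K3 n x y = sL (tolist x) (tolist y).
Proof.
apply/idP/idP.
  case/existsP => d /and3P [/forallP H1 Hd /forallP H2].
  have Hdn : d < n := ltn_ord d.
  set p := take d (tolist x).
  have Sp : size p = d by rewrite size_take size_tolist Hdn.
  have Ex : tolist x = p ++ (x d : nat) :: nseq (n - d.+1) (y d : nat).
    apply: (@eq_from_nth _ 0); first by rewrite size_cat /= size_nseq size_tolist Sp; lia.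
    move=> i; rewrite size_tolist => Hi.
    rewrite nth_form ?Sp; last by lia.
    have -> : nth 0 (tolist x) i = x (Ordinal Hi) by exact: (nth_tolist x (Ordinal Hi)).
    case: ltnP => Hid; first by rewrite nth_take // -(nth_tolist x (Ordinal Hi)).
    case: eqP => [Eid|Nid]; first by rewrite (_ : Ordinal Hi = d) //; apply/val_inj.
    have Hlt : d < Ordinal Hi by rewrite /= ltn_neqAle Hid andbT; apply/eqP => E; apply: Nid.
    by have := H2 (Ordinal Hi); rewrite Hlt /= => /andP [/eqP -> _].
  have Ey : tolist y = p ++ (y d : nat) :: nseq (n - d.+1) (x d : nat).
    apply: (@eq_from_nth _ 0); first by rewrite size_cat /= size_nseq size_tolist Sp; lia.
    move=> i; rewrite size_tolist => Hi.
    rewrite nth_form ?Sp; last by lia.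
    have -> : nth 0 (tolist y) i = y (Ordinal Hi) by exact: (nth_tolist y (Ordinal Hi)).
    case: ltnP => Hid.
      rewrite nth_take // (nth_tolist x (Ordinal Hi)).
      by have := H1 (Ordinal Hi); rewrite /= Hid /= => /eqP ->.
    case: eqP => [Eid|Nid]; first by rewrite (_ : Ordinal Hi = d) //; apply/val_inj.
    have Hlt : d < Ordinal Hi by rewrite /= ltn_neqAle Hid andbT; apply/eqP => E; apply: Nid.
    by have := H2 (Ordinal Hi); rewrite Hlt /= => /andP [_ /eqP ->].
  by rewrite Ex Ey sL_formE.
move/sL_form => [p [a [b [m [ab Ex Ey]]]]].
have Sn : size p + m.+1 = n by rewrite -(size_tolist x) Ex size_cat /= size_nseq.
have Hd : size p < n by lia.
apply/existsP; exists (Ordinal Hd); apply/and3P; split.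
- apply/forallP => i; apply/implyP => /= Hi.
  rewrite -(inj_eq val_inj) /= -!nth_tolist Ex Ey !nth_form ?Hi //; lia.
- have Xd : (x (Ordinal Hd) : nat) = a.
    by rewrite -nth_tolist Ex nth_form /= ?ltnn ?eqxx //; lia.
  have Yd : (y (Ordinal Hd) : nat) = b.
    by rewrite -nth_tolist Ey nth_form /= ?ltnn ?eqxx //; lia.
  by rewrite /K3 -(inj_eq val_inj) /= Xd Yd.
- apply/forallP => i; apply/implyP => /= Hi.
  rewrite -!(inj_eq val_inj) /= -!nth_tolist Ex Ey !nth_form /= ?ltnn ?eqxx; try (have := ltn_ord i; lia).
  have -> : (i < size p) = false by lia.
  have -> : (i == size p :> nat) = false by lia.
  by rewrite !eqxx.
Qed.

Lemma chkP (S : eqType) (L : seq S) (R : rel S) c k : chk L R c k ->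
  forall x y, x \in L -> y \in L -> R x y ->
  [/\ c x y = c y x, 0 < c x y <= k, x != y &
      forall z u, z \in L -> u \in L -> R y z -> z != x -> R z u -> u != y -> c x y != c z u].
Proof.
move=> H x y xL yL Rxy.
move: (allP H x xL) => /allP /(_ y yL); rewrite Rxy.
case: eqP => // E; case: ifP => // Hk; case: ifP => // xy /allP Hz.
split => // z u zL uL Ryz zx Rzu uy.
by move: (Hz z zL); rewrite Ryz zx => /allP /(_ u uL); rewrite Rzu uy.
Qed.

Lemma transfer (T : finType) (e : rel T) (S : eqType) (L : seq S) (R : rel S) c k (F : T -> S) :
  (forall x y, e x y -> e y x) -> (forall x y, e x y -> R (F x) (F y)) -> (forall x, F x \in L) ->
  (forall x y z, e x y -> e x z -> y != z -> F y != F z) -> chk L R c k ->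
  inj_edge_coloring e k (fun x y => c (F x) (F y)).
Proof.
move=> Es Eh EL Ei Hc; split; [|split].
- by move=> x y exy; have [] := chkP Hc (EL x) (EL y) (Eh _ _ exy).
- by move=> x y exy; have [] := chkP Hc (EL x) (EL y) (Eh _ _ exy).
- move=> x y z u exy eyz ezu xy yz xz uy uz.
  have [_ _ _ H] := chkP Hc (EL x) (EL y) (Eh _ _ exy).
  apply: H; [exact: EL | exact: EL | exact: Eh | | exact: Eh | ].
  + by rewrite eq_sym; apply: (Ei y) => //; apply: Es.
  + by apply: (Ei z) => //; apply: Es.
Qed.

Lemma sierp_sym n x y : sierp K3 n x y -> sierp K3 n y x.
Proof. by rewrite !sierp_sL sL_sym. Qed.

Lemma upper_gen n (tab : seq ((seq nat * seq nat) * nat)) k :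
  chk (words n) sL (lookup tab) k -> inj_edge_colorable (sierp K3 n) k.
Proof.
move=> Hc; exists (fun x y => lookup tab (tolist x) (tolist y)).
apply: transfer Hc.
- exact: sierp_sym.
- by move=> x y; rewrite sierp_sL.
- by move=> x; apply: in_words; [exact: size_tolist | exact: all_tolist].
- by move=> x y z _ _; rewrite (inj_eq (@tolist_inj n)).
Qed.

Lemma upper_big n : 3 <= n -> chk LH Rt (lookup tabH) 5 -> inj_edge_colorable (sierp K3 n) 5.
Proof.
move=> Hn Hc; exists (fun x y => lookup tabH (st (tolist x)) (st (tolist y))).
apply: (transfer (F := fun x => st (tolist x))) Hc.
- exact: sierp_sym.
- by move=> x y; rewrite sierp_sL; apply: hom; rewrite size_tolist.
- by move=> x; apply: st_in; [rewrite size_tolist | exact: all_tolist].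
- move=> x y z; rewrite !sierp_sL => H1 H2 yz.
  have := locinj _ H1 H2; rewrite size_tolist (inj_eq (@tolist_inj n)) => /(_ Hn yz).
  by apply: contra => /eqP /(congr1 fst) /= ->.
Qed.

Definition consistent (cf : seq (nat * nat)) (asg : seq nat) :=
  all (fun p => if p.1 < size asg then if p.2 < size asg then nth 0 asg p.1 != nth 0 asg p.2 else true else true) cf.

Fixpoint search (cf : seq (nat * nat)) (j : nat) (fuel : nat) (asg : seq nat) : bool :=
  if fuel is f.+1 then
    has (fun col => if consistent cf (rcons asg col) then search cf j f (rcons asg col) else false) (iota 1 j)
  else true.

Lemma search_sound cf j N (f : nat -> nat) :
  (forall i, i < N -> 0 < f i <= j) -> (forall p, p \in cf -> f p.1 != f p.2) ->
  search cf j N [::].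
Proof.
move=> Hr Hcf.
suff H : forall fuel i, i + fuel = N -> search cf j fuel (mkseq f i) by exact: (H N 0).
elim=> [|fuel IH] i Hi //=.
apply/hasP; exists (f i).
  by rewrite mem_iota; have := Hr i; lia.
rewrite -mkseqS.
have -> : consistent cf (mkseq f i.+1).
  apply/allP => p pc; rewrite size_mkseq; case: ifP => // h1; case: ifP => // h2.
  by rewrite !nth_mkseq //; exact: Hcf.
apply: IH; lia.
Qed.

Definition okw k (w : seq nat) := (size w == k) && all (fun a => a < 3) w.
Definition edok k (ed : seq (seq nat * seq nat)) :=
  all (fun p => okw k p.1 && okw k p.2 && sL p.1 p.2) ed.
Definition witok k (ed : seq (seq nat * seq nat)) (q : (nat * nat) * (seq nat * seq nat * seq nat * seq nat)) :=
  let: ((a, b), (x, y, z, u)) := q in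
  okw k x && okw k y && okw k z && okw k u && sL x y && sL y z && sL z u &&
  (x != y) && (y != z) && (x != z) && (u != y) && (u != z) &&
  (((x, y) == nth ([::], [::]) ed a) || ((y, x) == nth ([::], [::]) ed a)) &&
  (((z, u) == nth ([::], [::]) ed b) || ((u, z) == nth ([::], [::]) ed b)).

Lemma lower n k j ed wit : k <= n -> edok k ed -> all (witok k ed) wit ->
  search (map fst wit) j (size ed) [::] = false -> ~ inj_edge_colorable (sierp K3 n) j.
Proof.
move=> kn Hed Hwit Hs [c [Csym [Crange Ccf]]].
pose g (w : seq nat) : {ffun 'I_n -> 'I_3} := fromlist n (nseq (n - k) 0 ++ w).
have Tg : forall w, okw k w -> tolist (g w) = nseq (n - k) 0 ++ w.
  move=> w /andP [/eqP Sw Aw]; apply: tolist_from.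
    by rewrite size_cat size_nseq Sw subnK.
  by rewrite all_cat Aw andbT; apply/allP => a /nseqP [->].
have Eg : forall v w, okw k v -> okw k w -> sL v w -> sierp K3 n (g v) (g w).
  by move=> v w Hv Hw; rewrite sierp_sL !Tg // sL_cat.
have Ng : forall v w, okw k v -> okw k w -> v != w -> g v != g w.
  move=> v w Hv Hw; apply: contra => /eqP E.
  have := congr1 (fun x => drop (n - k) (tolist x)) E.
  by rewrite /= !Tg // !drop_size_cat ?size_nseq // => ->.
pose d0 := ([::] : seq nat, [::] : seq nat).
pose f i := c (g (nth d0 ed i).1) (g (nth d0 ed i).2).
suff : search (map fst wit) j (size ed) [::] by rewrite Hs.
apply: (search_sound (f := f)).
  move=> i Hi; move/allP: Hed => /(_ _ (mem_nth d0 Hi)) /andP [/andP [h1 h2] h3].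
  exact: Crange (Eg _ _ h1 h2 h3).
move=> p /mapP [q qw ->].
move: (allP Hwit q qw); case: q qw => [[a b] [[[x y] z] u]] qw /=.
do 13! case/andP; move=> ox oy oz ou sxy syz szu nxy nyz nxz nuy nuz ha hb.
have Hc := Ccf _ _ _ _ (Eg _ _ ox oy sxy) (Eg _ _ oy oz syz) (Eg _ _ oz ou szu)
  (Ng _ _ ox oy nxy) (Ng _ _ oy oz nyz) (Ng _ _ ox oz nxz) (Ng _ _ ou oy nuy) (Ng _ _ ou oz nuz).
have Fa : f a = c (g x) (g y).
  rewrite /f /d0; case/orP: ha => /eqP <- /=; first by [].
  exact: (Csym _ _ (sierp_sym (Eg _ _ ox oy sxy))).
have Fb : f b = c (g z) (g u).
  rewrite /f /d0; case/orP: hb => /eqP <- /=; first by [].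
  exact: (Csym _ _ (sierp_sym (Eg _ _ oz ou szu))).
by rewrite Fa Fb.
Qed.

Lemma weaken (T : finType) (e : rel T) j k : j <= k -> inj_edge_colorable e j -> inj_edge_colorable e k.
Proof.
move=> jk [c [H1 [H2 H3]]]; exists c; split => //; split => // x y exy.
by have /andP [-> /leq_trans ->] := H2 x y exy.
Qed.

Lemma chk1 : chk (words 1) sL (lookup tab1) 3. Proof. by vm_compute. Qed.
Lemma chk2 : chk (words 2) sL (lookup tab2) 4. Proof. by vm_compute. Qed.
Lemma chkH : chk LH Rt (lookup tabH) 5. Proof. by vm_compute. Qed.

Lemma ed1ok : edok 1 ed1. Proof. by vm_compute. Qed.
Lemma wit1ok : all (witok 1 ed1) wit1. Proof. by vm_compute. Qed.
Lemma s1 : search (map fst wit1) 2 (size ed1) [::] = false. Proof. by vm_compute. Qed.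
Lemma ed2ok : edok 2 ed2. Proof. by vm_compute. Qed.
Lemma wit2ok : all (witok 2 ed2) wit2. Proof. by vm_compute. Qed.
Lemma s2 : search (map fst wit2) 3 (size ed2) [::] = false. Proof. by vm_compute. Qed.
Lemma ed3ok : edok 3 ed3. Proof. by vm_compute. Qed.
Lemma wit3ok : all (witok 3 ed3) wit3. Proof. by vm_compute. Qed.
Lemma s3 : search (map fst wit3) 4 (size ed3) [::] = false. Proof. by vm_compute. Qed.

Theorem mainTheorem5 :
  inj_chromatic_index_is (sierp K3 1) 3 /\
  inj_chromatic_index_is (sierp K3 2) 4 /\
  (forall n : nat, 3 <= n -> inj_chromatic_index_is (sierp K3 n) 5).
Proof.
split; [|split].
- split; first exact: upper_gen chk1.
  move=> j Hj Hc; apply: (lower (k := 1) (leqnn 1) ed1ok wit1ok s1).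
  by apply: weaken Hc; lia.
- split; first exact: upper_gen chk2.
  move=> j Hj Hc; apply: (lower (k := 2) (leqnn 2) ed2ok wit2ok s2).
  by apply: weaken Hc; lia.
- move=> n Hn; split; first exact: upper_big Hn chkH.
  move=> j Hj Hc; apply: (lower Hn ed3ok wit3ok s3).
  by apply: weaken Hc; lia.
Qed.
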